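(* Let $G$ be a finitely generated group with growth function $g_G(n)$. Then $U_{W(G)}(n) \ge g_G(\lfloor n/2\rfloor)$ for all $n$.
   Context: For a finite generating set $X$ of $G$, $|g|_X$ is the length of a shortest word over $X\cup X^{-1}$ representing $g$, and $g_G(n)=|\{g\in G: |g|_X\le n\}|$ is the growth function. $W(G)=W(G,X)$ is the word problem language: the set of words over $X\cup X^{-1}$ representing the identity of $G$. A finite set $S$ of strings is uniformly $n$-dissimilar for a language $\mathtt{L}$ if for each $w\in S$ there is a string $v$ with $|wv|\le n$, $wv\in\mathtt{L}$, and for every $w'\in S$, $w'\neq w$, $|w'v|\le n$ and $w'v\notin\mathtt{L}$. $U_{\mathtt{L}}(n)$ is the maximum cardinality of a uniformly $n$-dissimilar set for $\mathtt{L}$. *)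

(* Defs.v *)
From HB Require Import structures.
From mathcomp Require Import all_boot.
From mathcomp Require Import finmap.

Set Implicit Arguments.
Unset Strict Implicit.
Unset Printing Implicit Defensive.

Local Open Scope fset_scope.
Local Open Scope group_scope.

(* Letters of the alphabet X ∪ X^{-1}: (x, false) stands for x, (x, true)
   for the formal inverse x^{-1}. *)
Definition letter (G : groupType) (X : {fset G}) := (X * bool)%type.

Definition eval_word (G : groupType) (X : {fset G}) (w : seq (letter X)) : G :=
  foldr (fun a g => (if a.2 then (val a.1)^-1 else val a.1) * g) 1 w.

Definition generates (G : groupType) (X : {fset G}) : Prop :=
  forall g : G, exists w : seq (letter X), eval_word w = g.

Definition word_problem (G : groupType) (X : {fset G}) : pred (seq (letter X)) :=
  fun w => eval_word w == 1.

Definition bword (A : finType) (n : nat) := {k : 'I_n.+1 & k.-tuple A}.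
Definition bw (A : finType) (n : nat) (u : bword A n) : seq A := val (tagged u).

Definition words_upto (A : finType) (n : nat) : seq (seq A) :=
  [seq bw u | u <- enum [set: bword A n]].

Definition word_length_le (G : groupType) (X : {fset G}) (g : G) (n : nat) : Prop :=
  exists w : seq (letter X), size w <= n /\ eval_word w = g.

Definition growth (G : groupType) (X : {fset G}) (n : nat) : nat :=
  size (undup [seq eval_word w | w <- words_upto (letter X) n]).

(* Since every w in S needs a v with |wv| <= n, all strings of S (and the
   witnesses v) have length <= n, so S ranges over subsets of [bword A n]. *)
Definition unif_dissimilar (A : finType) (L : pred (seq A)) (n : nat)
    (S : {set bword A n}) : bool :=
  [forall w in S, exists v : bword A n,
     [&& size (bw w ++ bw v) <= n, L (bw w ++ bw v) &
      [forall w' in S, (w' != w) ==>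
         ((size (bw w' ++ bw v) <= n) && ~~ L (bw w' ++ bw v))]]].

Definition U_L (A : finType) (L : pred (seq A)) (n : nat) : nat :=
  \max_(S : {set bword A n} | unif_dissimilar L S) #|S|%N.

Arguments word_problem {G} X.
Arguments growth {G} X n.
Arguments generates {G} X.
Arguments U_L {A} L n.

(* Main.v *)
Require Import Defs.
From HB Require Import structures.
From mathcomp Require Import all_boot.
From mathcomp Require Import finmap.

Local Open Scope group_scope.

Section Aux.
Variables (G : groupType) (X : {fset G}).

Definition inv_word (w : seq (letter X)) : seq (letter X) :=
  rev (map (fun a => (a.1, ~~ a.2)) w).


Lemma eval_cat (a b : seq (letter X)) : eval_word (a ++ b) = eval_word a * eval_word b.
Proof.
elim: a => [|x a IH] /=; first by rewrite mul1g.
by rewrite /eval_word /= -/(eval_word _) -/(eval_word (a ++ b)) IH mulgA.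
Qed.

Lemma eval_inv (w : seq (letter X)) : eval_word (inv_word w) = (eval_word w)^-1.
Proof.
elim: w => [|x w IH]; first by rewrite /= invg1.
rewrite /inv_word /= rev_cons -cats1 eval_cat -/(inv_word w) IH.
rewrite /eval_word /= -/(eval_word w) invgM mulg1.
by case: x.2; rewrite ?invgK.
Qed.

Lemma eval_w_inv (w : seq (letter X)) : eval_word (w ++ inv_word w) = 1.
Proof. by rewrite eval_cat eval_inv mulgV. Qed.

Lemma size_inv_word w : size (inv_word w) = size w.
Proof. by rewrite /inv_word size_rev size_map. Qed.
End Aux.
Arguments inv_word {G X} w.

Lemma size_take_le (A : Type) n (w : seq A) : size (take n w) < n.+1.
Proof. by rewrite ltnS size_take_min geq_minl. Qed.

Definition emb (A : finType) n (w : seq A) : bword A n :=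
  @existT _ (fun k : 'I_n.+1 => k.-tuple A) (Ordinal (size_take_le _ n w)) (in_tuple (take n w)).

Arguments emb {A} n w.

Lemma bw_emb (A : finType) n (w : seq A) : size w <= n -> bw (emb n w) = w.
Proof. by move=> h; rewrite /bw /emb /= take_oversize. Qed.

Lemma words_upto_size (A : finType) m w : w \in words_upto A m -> size w <= m.
Proof.
case/mapP => u _ ->; rewrite /bw size_tuple.
by case: u => k t /=; rewrite -ltnS.
Qed.

Theorem lemma4p3 (G : groupType) (X : {fset G}) :
  generates X ->
  forall n : nat, growth X n./2 <= U_L (word_problem X) n.
Proof.
move=> _ n.
set m := n./2.
have hmn : m + m <= n.
  by rewrite addnn -[leqRHS](odd_double_half n) leq_addl.
set W := words_upto (letter X) m.
set s := undup [seq eval_word w | w <- W].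
pose pick (g : G) := nth [::] W (find (fun w => eval_word w == g) W).
have pickP g : g \in s -> pick g \in W /\ eval_word (pick g) = g.
  rewrite mem_undup => /mapP [w wW ->].
  have hh : has (fun w' => eval_word w' == eval_word w) W.
    by apply/hasP; exists w.
  split; first by rewrite /pick mem_nth // -has_find.
  by apply/eqP; exact: (nth_find [::] hh).
set T := [seq pick g | g <- s].
have uT : uniq T.
  rewrite map_inj_in_uniq ?undup_uniq //.
  move=> g g' gs g's e.
  by rewrite -(pickP g gs).2 -(pickP g' g's).2 e.
have Tprop w : w \in T -> size w <= m.
  case/mapP => g gs ->; exact: words_upto_size (pickP g gs).1.
have Tinj w w' : w \in T -> w' \in T -> eval_word w = eval_word w' -> w = w'.
  case/mapP => g gs ->; case/mapP => g' g's -> e.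
  by move: e; rewrite (pickP g gs).2 (pickP g' g's).2 => ->.
pose S := [set u : bword (letter X) n | (bw u \in T) && (emb n (bw u) == u)].
have hmn' : m <= n by apply: leq_trans hmn; rewrite leq_addr.
have sizeT : growth X m = size T by rewrite size_map.
rewrite sizeT.
have embT w : w \in T -> bw (emb n w) = w.
  by move=> wT; rewrite bw_emb // (leq_trans (Tprop w wT)).
apply: (@leq_trans #|S|).
  rewrite cardE -(size_map (@bw _ n)).
  apply: (uniq_leq_size uT) => w wT.
  apply/mapP; exists (emb n w); last by rewrite embT.
  by rewrite mem_enum inE embT // wT eqxx.
apply: leq_bigmax_cond.
apply/forall_inP => u; rewrite inE => /andP [uTT /eqP ue].
apply/existsP; exists (emb n (inv_word (bw u))).
have hsz : size (inv_word (bw u)) <= n.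
  by rewrite size_inv_word (leq_trans (Tprop _ uTT)).
rewrite bw_emb //.
apply/and3P; split.
- by rewrite size_cat size_inv_word (leq_trans _ hmn) // leq_add ?Tprop.
- by rewrite /word_problem /= eval_w_inv.
apply/forall_inP => u'; rewrite inE => /andP [u'T /eqP u'e].
apply/implyP => ne; apply/andP; split.
  by rewrite size_cat size_inv_word (leq_trans _ hmn) // leq_add ?Tprop.
rewrite /word_problem /= eval_cat eval_inv mulg_eq1 invgK.
apply/eqP => e; move/eqP: ne; apply.
by rewrite -ue -u'e (Tinj _ _ u'T uTT e).
Qed.
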